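(* Let $\alpha>0$ be a constant and let $n$ be an integer with $n\ge 10+4\alpha$. Then the solution curve of the generalized Gelfand problem \[ u''+\frac{n-1}{r}u'+\lambda r^{\alpha}e^{u}=0 \quad (0<r<1), \qquad u'(0)=0,\quad u(1)=0, \] admits at most two turns. That is, with $w$ and $\lambda(t)$ as in the context, $\lambda'(t)$ changes sign at most twice on $(0,\infty)$.
   Context: Here $\lambda>0$ is a parameter. Let $w(t)$ be the solution of the initial value problem \[ w''+\frac{n-1}{t}w'+t^{\alpha}e^{w}=0, \qquad w(0)=0,\quad w'(0)=0 \qquad (t>0). \] This solution is negative and decreasing and is defined for all $t>0$. For each $t>0$, the function $u(r)=w(tr)-w(t)$ solves the boundary value problem with $\lambda=\lambda(t):=t^{\alpha+2}e^{w(t)}$, and all solutions arise in this way. The solution curve is the parametrized curve \[ t\mapsto(\lambda,u(0))=\bigl(t^{\alpha+2}e^{w(t)},\,-w(t)\bigr), \qquad t\in(0,\infty). \] A turn of the curve is a change of sign of $\lambda'(t)$. *)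

(* Defs.v *)
From Stdlib Require Import Reals.
From Coquelicot Require Import Coquelicot.
Open Scope R_scope.

Definition gelfand_ivp_solution (n : nat) (alpha : R) (w : R -> R) : Prop :=
  w 0 = 0 /\
  filterlim (fun t => (w t - w 0) / t) (at_right 0) (locally 0) /\
  exists dw : R -> R,
    forall t, 0 < t ->
      is_derive w t (dw t) /\
      is_derive dw t (- ((INR n - 1) / t * dw t + Rpower t alpha * exp (w t))).

Definition lam (alpha : R) (w : R -> R) (t : R) : R :=
  Rpower t (alpha + 2) * exp (w t).

Definition at_most_two_sign_changes (f : R -> R) : Prop :=
  ~ (exists t1 t2 t3 t4 : R,
       0 < t1 /\ t1 < t2 /\ t2 < t3 /\ t3 < t4 /\
       f t1 * f t2 < 0 /\ f t2 * f t3 < 0 /\ f t3 * f t4 < 0).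

(* Main.v *)
Require Import Defs.
From Stdlib Require Import Reals Lra.
From Coquelicot Require Import Coquelicot.
Open Scope R_scope.

Definition ODE (n : nat) (alpha : R) (w dw : R -> R) : Prop :=
  forall t, 0 < t ->
      is_derive w t (dw t) /\
      is_derive dw t (- ((INR n - 1) / t * dw t + Rpower t alpha * exp (w t))).

Definition xf alpha n (w : R -> R) t := (alpha+2) * ln t + w t - ln ((INR n - 2)*(alpha+2)).
Definition psif alpha (dw : R -> R) t := t * dw t + (alpha+2).
Definition Gf alpha n w dw t := psif alpha dw t + (INR n - 2)/2 * xf alpha n w t.
Definition Lf alpha (w : R -> R) t := exp ((alpha+2)*ln t + w t).

Lemma Lf_eq alpha w t : 0 < t -> Lf alpha w t = Rpower t alpha * t * t * exp (w t).
Proof.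
  intros Ht. unfold Lf, Rpower.
  replace ((alpha+2) * ln t + w t) with (alpha * ln t + ln t + ln t + w t) by ring.
  rewrite !exp_plus, exp_ln by exact Ht. ring.
Qed.

Lemma d_x n alpha w dw t : ODE n alpha w dw -> 0 < t ->
  is_derive (xf alpha n w) t (psif alpha dw t / t).
Proof.
  intros H Ht. destruct (H t Ht) as [Hw _]. unfold xf, psif.
  auto_derive.
  - repeat split; auto. exists (dw t); auto.
  - replace (Derive (fun x => w x) t) with (dw t) by (symmetry; apply is_derive_unique; exact Hw).
    field. lra.
Qed.

Lemma d_psi n alpha w dw t : ODE n alpha w dw -> 0 < t ->
  is_derive (psif alpha dw) t (- ((INR n - 2) * dw t) - Lf alpha w t / t).
Proof.
  intros H Ht. destruct (H t Ht) as [Hw Hdw]. unfold psif.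
  auto_derive.
  - repeat split; auto; eexists; eauto.
  - replace (Derive (fun x => dw x) t) with (- ((INR n - 1) / t * dw t + Rpower t alpha * exp (w t))) by (symmetry; apply is_derive_unique; exact Hdw).
    rewrite Lf_eq by lra. field. lra.
Qed.

Ltac rep_der H := match type of H with is_derive ?f ?t ?l =>
  replace (Derive (fun x => f x) t) with l by (symmetry; apply is_derive_unique; exact H) end.

Lemma d_G n alpha w dw t : ODE n alpha w dw -> 0 < t ->
  is_derive (Gf alpha n w dw) t
   ((- ((INR n - 2) * dw t) - Lf alpha w t / t) + (INR n - 2)/2 * (psif alpha dw t / t)).
Proof.
  intros H Ht. pose proof (d_x n alpha w dw t H Ht) as Hx.
  pose proof (d_psi n alpha w dw t H Ht) as Hp. unfold Gf.
  auto_derive.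
  - repeat split; auto; eexists; eauto.
  - rep_der Hx. rep_der Hp. ring.
Qed.

Lemma d_H n alpha w dw t : ODE n alpha w dw -> 0 < t ->
  is_derive (fun t => Gf alpha n w dw t * exp ((INR n - 2)/2 * ln t)) t
   (exp ((INR n - 2)/2 * ln t) / t *
     (t * ((- ((INR n - 2) * dw t) - Lf alpha w t / t) + (INR n - 2)/2 * (psif alpha dw t / t))
      + (INR n - 2)/2 * Gf alpha n w dw t)).
Proof.
  intros H Ht. pose proof (d_G n alpha w dw t H Ht) as Hg.
  auto_derive.
  - repeat split; auto; eexists; eauto.
  - rep_der Hg. field. lra.
Qed.

Lemma d_Y n alpha w dw t : ODE n alpha w dw -> 0 < t ->
  is_derive (fun t => xf alpha n w t * exp ((INR n - 2)/2 * ln t)) t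
   (exp ((INR n - 2)/2 * ln t) / t * Gf alpha n w dw t).
Proof.
  intros H Ht. pose proof (d_x n alpha w dw t H Ht) as Hg.
  auto_derive.
  - repeat split; auto; eexists; eauto.
  - rep_der Hg. unfold Gf. field. lra.
Qed.

Lemma d_Z n alpha w dw t : ODE n alpha w dw -> 0 < t ->
  is_derive (fun t => psif alpha dw t * exp ((INR n - 2) * ln t)) t
   (exp ((INR n - 2) * ln t) / t * ((INR n - 2) * (alpha + 2) - Lf alpha w t)).
Proof.
  intros H Ht. pose proof (d_psi n alpha w dw t H Ht) as Hg.
  auto_derive.
  - repeat split; auto; eexists; eauto.
  - rep_der Hg. unfold psif. field. lra.
Qed.

Lemma d_lam alpha w dw t : 0 < t -> is_derive w t (dw t) ->
  is_derive (lam alpha w) t (Lf alpha w t * psif alpha dw t / t).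
Proof.
  intros Ht Hw. unfold lam, Rpower.
  auto_derive.
  - repeat split; auto; eexists; eauto.
  - rep_der Hw. unfold Lf, psif. rewrite exp_plus. field. lra.
Qed.

Lemma Lf_K n alpha w t : 0 < t -> 0 < (INR n - 2) * (alpha + 2) ->
  Lf alpha w t = (INR n - 2) * (alpha + 2) * exp (xf alpha n w t).
Proof.
  intros Ht HK. unfold Lf, xf.
  replace ((alpha + 2) * ln t + w t) with
    (((alpha + 2) * ln t + w t - ln ((INR n - 2) * (alpha + 2))) + ln ((INR n - 2) * (alpha + 2))) at 1 by ring.
  rewrite exp_plus, exp_ln by exact HK. ring.
Qed.

Lemma key_H n alpha w dw t : 0 < alpha -> 10 + 4 * alpha <= INR n -> 0 < t ->
  xf alpha n w t <= 0 ->
  t * ((- ((INR n - 2) * dw t) - Lf alpha w t / t) + (INR n - 2)/2 * (psif alpha dw t / t))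
      + (INR n - 2)/2 * Gf alpha n w dw t <= 0.
Proof.
  intros Ha Hn Ht Hx.
  assert (HK : 0 < (INR n - 2) * (alpha + 2)) by nra.
  rewrite (Lf_K n alpha w t Ht HK). unfold Gf, psif.
  set (x := xf alpha n w t) in *. set (m := INR n - 2) in *.
  pose proof (exp_ineq1_le x) as He.
  replace (t * (- (m * dw t) - m * (alpha + 2) * exp x / t + m / 2 * ((t * dw t + (alpha + 2)) / t)) +
   m / 2 * (t * dw t + (alpha + 2) + m / 2 * x)) with
    (m * (alpha + 2) * (1 - exp x) + m * m / 4 * x) by (field; lra).
  assert (m * (alpha + 2) * (1 - exp x) <= m * (alpha + 2) * (- x)) by (apply Rmult_le_compat_l; lra).
  assert (m >= 4*(alpha+2)) by (unfold m; lra).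
  assert (0 <= m * (m/4 - (alpha+2))) by nra.
  nra.
Qed.

Lemma key_Z n alpha w t : 0 < alpha -> 10 + 4 * alpha <= INR n -> 0 < t ->
  xf alpha n w t <= 0 -> 0 <= (INR n - 2) * (alpha + 2) - Lf alpha w t.
Proof.
  intros Ha Hn Ht Hx.
  assert (HK : 0 < (INR n - 2) * (alpha + 2)) by nra.
  rewrite (Lf_K n alpha w t Ht HK).
  assert (exp (xf alpha n w t) <= 1).
  { rewrite <- exp_0. destruct (Req_dec (xf alpha n w t) 0) as [E|E].
    - rewrite E; lra.
    - left; apply exp_increasing; lra. }
  assert ((INR n - 2) * (alpha + 2) * exp (xf alpha n w t) <= (INR n - 2) * (alpha + 2) * 1)
    by (apply Rmult_le_compat_l; lra).
  lra.
Qed.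

Lemma mono_dec (f f' : R -> R) p q : p < q ->
  (forall u, p <= u <= q -> is_derive f u (f' u)) ->
  (forall u, p < u < q -> f' u <= 0) -> f q <= f p.
Proof.
  intros Hpq Hd Hs.
  destruct (MVT_cor2 f f' p q Hpq) as [c [E Hc]].
  { intros c Hc. apply is_derive_Reals. now apply Hd. }
  pose proof (Hs c Hc). nra.
Qed.

Lemma cont_neg (f : R -> R) s : continuous f s -> f s < 0 ->
  exists d, 0 < d /\ forall v, Rabs (v - s) < d -> f v < 0.
Proof.
  intros Hc Hs. assert (He: 0 < - f s) by lra.
  destruct (proj1 (filterlim_locally f (f s)) Hc (mkposreal _ He)) as [d Hd].
  exists d. split; [apply cond_pos|]. intros v Hv.
  assert (Hb : ball s d v) by exact Hv.
  specialize (Hd v Hb).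
  change (Rabs (f v - f s) < - f s) in Hd.
  pose proof (Rle_abs (f v - f s)). lra.
Qed.

Lemma first_exit2 (f g : R -> R) p q : p <= q ->
  (forall u, p <= u <= q -> continuous f u /\ continuous g u) ->
  (0 <= f q \/ 0 <= g q) ->
  exists s, p <= s <= q /\ (0 <= f s \/ 0 <= g s) /\
    forall u, p <= u < s -> f u < 0 /\ g u < 0.
Proof.
  intros Hpq Hc Hq.
  destruct (Rle_lt_dec 0 (f p)) as [Hf|Hf].
  { exists p. split; [lra|]. split; [auto|]. intros; lra. }
  destruct (Rle_lt_dec 0 (g p)) as [Hg|Hg].
  { exists p. split; [lra|]. split; [auto|]. intros; lra. }
  set (E := fun u => p <= u <= q /\ forall v, p <= v <= u -> f v < 0 /\ g v < 0).
  assert (HEp : E p).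
  { split; [lra|]. intros v Hv. replace v with p by lra. auto. }
  assert (Hb : bound E). { exists q. intros u [Hu _]. lra. }
  destruct (completeness E Hb (ex_intro _ p HEp)) as [s [Hub Hlub]].
  assert (Hps : p <= s) by (apply Hub; exact HEp).
  assert (Hsq : s <= q). { apply Hlub. intros u [Hu _]. lra. }
  assert (Hbelow : forall u, p <= u < s -> f u < 0 /\ g u < 0).
  { intros u Hu. destruct (Classical_Prop.classic (f u < 0 /\ g u < 0)) as [ok|nok]; [exact ok|].
    exfalso. assert (is_upper_bound E u).
    { intros e He. destruct (Rle_lt_dec e u) as [|Hlt]; auto.
      exfalso. apply nok. apply (proj2 He). lra. }
    assert (s <= u) by (apply Hlub; auto). lra. }
  exists s. split; [lra|]. split; [|exact Hbelow].
  destruct (Rle_lt_dec 0 (f s)) as [A|A]; [now left|].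
  destruct (Rle_lt_dec 0 (g s)) as [B|B]; [now right|].
  exfalso.
  assert (Hsq' : s < q).
  { destruct (Rle_lt_or_eq_dec s q Hsq) as [|e]; auto. subst s. destruct Hq; lra. }
  destruct (Hc s (conj Hps Hsq)) as [Cf Cg].
  destruct (cont_neg f s Cf A) as [d1 [Hd1 Hf1]].
  destruct (cont_neg g s Cg B) as [d2 [Hd2 Hg2]].
  set (s' := Rmin q (s + Rmin d1 d2 / 2)).
  assert (Hm1 : Rmin d1 d2 <= d1) by apply Rmin_l.
  assert (Hm2 : Rmin d1 d2 <= d2) by apply Rmin_r.
  assert (Hm0 : 0 < Rmin d1 d2) by (apply Rmin_glb_lt; auto).
  assert (Hs'1 : s' <= q) by apply Rmin_l.
  assert (Hs'2 : s' <= s + Rmin d1 d2 / 2) by apply Rmin_r.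
  assert (Hs'3 : s < s') by (apply Rmin_glb_lt; lra).
  assert (E s').
  { split; [lra|]. intros v Hv.
    destruct (Rlt_le_dec v s) as [Hvs|Hvs]; [apply Hbelow; lra|].
    assert (Rabs (v - s) < d1 /\ Rabs (v - s) < d2).
    { rewrite Rabs_right by lra. lra. }
    split; [apply Hf1|apply Hg2]; tauto. }
  assert (s' <= s) by (apply Hub; auto). lra.
Qed.

Lemma start n alpha w dw t1 : 0 < alpha -> 10 + 4 * alpha <= INR n -> w 0 = 0 ->
  filterlim (fun t => (w t - w 0) / t) (at_right 0) (locally 0) ->
  ODE n alpha w dw -> 0 < t1 ->
  exists t0, 0 < t0 < t1 /\ xf alpha n w t0 < 0 /\ Gf alpha n w dw t0 < 0 /\ 0 < psif alpha dw t0.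
Proof.
  intros Ha Hn Hw0 Hlim H Ht1.
  destruct (proj1 (filterlim_locally _ 0) Hlim (mkposreal 1 Rlt_0_1)) as [d Hd].
  assert (Hbd : forall y, 0 < y < d -> Rabs (w y) < y).
  { intros y Hy. assert (Hb : ball 0 d y).
    { change (Rabs (y - 0) < d). rewrite Rabs_right by lra. lra. }
    specialize (Hd y Hb (proj1 Hy)).
    change (Rabs ((w y - w 0) / y - 0) < 1) in Hd.
    rewrite Hw0 in Hd. set (z := (w y - 0) / y) in Hd.
    assert (E : w y = z * y) by (unfold z; field; lra).
    apply Rabs_def2 in Hd. rewrite E, Rabs_mult, (Rabs_right y) by lra.
    assert (Rabs z < 1) by (apply Rabs_def1; lra). nra. }
  pose proof (cond_pos d) as Hdpos.
  set (a := alpha + 2) in *. set (m := INR n - 2).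
  assert (Hm : m >= 4 * a) by (unfold m, a; lra).
  set (K := m * a). set (c := m / 2).
  assert (Hapos : 2 < a) by (unfold a; lra).
  assert (HK : 0 < K) by (unfold K; nra).
  assert (Hc : 0 < c) by (unfold c; lra).
  set (B := (ln K - 1 - (a + 1) / c) / a).
  pose proof (exp_pos B) as HeB.
  set (t := Rmin (Rmin (d/2) (1/8)) (Rmin (exp B / 2) (t1/2))).
  assert (Ht1' : t <= d/2 /\ t <= 1/8 /\ t <= exp B / 2 /\ t <= t1/2).
  { unfold t. repeat split.
    - eapply Rle_trans; [apply Rmin_l|apply Rmin_l].
    - eapply Rle_trans; [apply Rmin_l|apply Rmin_r].
    - eapply Rle_trans; [apply Rmin_r|apply Rmin_l].
    - eapply Rle_trans; [apply Rmin_r|apply Rmin_r]. }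
  assert (Htpos : 0 < t).
  { unfold t. repeat apply Rmin_glb_lt; lra. }
  destruct (MVT_cor2 w dw (t/2) t) as [xi [E Hxi]]; [lra| |].
  { intros u Hu. apply is_derive_Reals. apply (H u). lra. }
  exists xi.
  assert (H1 := Hbd t ltac:(lra)).
  assert (H2 := Hbd (t/2) ltac:(lra)).
  assert (H3 := Hbd xi ltac:(lra)).
  apply Rabs_def2 in H1. apply Rabs_def2 in H2. apply Rabs_def2 in H3.
  set (D := dw xi) in *.
  assert (HD : -3 < D < 3).
  { split; nra. }
  assert (Hpsi : -3/8 < xi * D < 3/8) by (split; nra).
  assert (Hln : ln xi < B).
  { rewrite <- (ln_exp B). apply ln_increasing; lra. }
  assert (HaB : a * B = ln K - 1 - (a + 1) / c) by (unfold B; field; lra).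
  assert (Hx : xf alpha n w xi < - (a + 1) / c).
  { unfold xf. fold a. fold m. fold K.
    assert (a * ln xi < a * B) by (apply Rmult_lt_compat_l; lra). lra. }
  assert (Hx2 : c * xf alpha n w xi < - (a + 1)).
  { replace (- (a+1)) with (c * (- (a + 1) / c)) by (field; lra).
    apply Rmult_lt_compat_l; lra. }
  assert (0 < (a+1)/c) by (apply Rdiv_lt_0_compat; lra).
  split; [lra|]. split; [lra|]. unfold Gf, psif. fold a. fold m. fold c. fold D.
  split; lra.
Qed.

Lemma mono_inc (f f' : R -> R) p q : p < q ->
  (forall u, p <= u <= q -> is_derive f u (f' u)) ->
  (forall u, p < u < q -> 0 <= f' u) -> f p <= f q.
Proof.
  intros Hpq Hd Hs.
  destruct (MVT_cor2 f f' p q Hpq) as [c [E Hc]].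
  { intros c Hc. apply is_derive_Reals. now apply Hd. }
  pose proof (Hs c Hc). nra.
Qed.

Lemma cont_of n alpha w dw u : ODE n alpha w dw -> 0 < u ->
  continuous (xf alpha n w) u /\ continuous (Gf alpha n w dw) u.
Proof.
  intros H Hu. split.
  - apply (ex_derive_continuous (xf alpha n w)). eexists. apply (d_x n alpha w dw u H Hu).
  - apply (ex_derive_continuous (Gf alpha n w dw)). eexists. apply (d_G n alpha w dw u H Hu).
Qed.

Lemma psi_pos n alpha w dw t1 : 0 < alpha -> 10 + 4 * alpha <= INR n -> w 0 = 0 ->
  filterlim (fun t => (w t - w 0) / t) (at_right 0) (locally 0) ->
  ODE n alpha w dw -> 0 < t1 -> 0 < psif alpha dw t1.
Proof.
  intros Ha Hn Hw0 Hlim H Ht1.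
  destruct (start n alpha w dw t1 Ha Hn Hw0 Hlim H Ht1) as [t0 [Ht0 [Hx0 [HG0 Hp0]]]].
  assert (Hall : forall u, t0 <= u <= t1 -> xf alpha n w u < 0 /\ Gf alpha n w dw u < 0).
  { intros u Hu. destruct (Classical_Prop.classic (xf alpha n w u < 0 /\ Gf alpha n w dw u < 0)) as [ok|nok]; [exact ok|].
    exfalso.
    assert (Hq : 0 <= xf alpha n w u \/ 0 <= Gf alpha n w dw u).
    { destruct (Rle_lt_dec 0 (xf alpha n w u)); auto.
      destruct (Rle_lt_dec 0 (Gf alpha n w dw u)); auto. tauto. }
    destruct (first_exit2 (xf alpha n w) (Gf alpha n w dw) t0 u ltac:(lra)) as [s [Hs [Hs0 Hbel]]]; auto.
    { intros v Hv. apply (cont_of n alpha w dw v H). lra. }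
    assert (Hts : t0 < s).
    { destruct (Rle_lt_or_eq_dec t0 s (proj1 Hs)) as [|e]; auto. subst s. lra. }
    assert (HH := mono_dec _ _ t0 s Hts (fun v Hv => d_H n alpha w dw v H ltac:(lra))).
    assert (HY := mono_dec _ _ t0 s Hts (fun v Hv => d_Y n alpha w dw v H ltac:(lra))).
    simpl in HH, HY.
    assert (Hs1 : Gf alpha n w dw s * exp ((INR n - 2) / 2 * ln s) <=
                  Gf alpha n w dw t0 * exp ((INR n - 2) / 2 * ln t0)).
    { apply HH. intros v Hv. destruct (Hbel v ltac:(lra)) as [Hxv _].
      pose proof (key_H n alpha w dw v Ha Hn ltac:(lra) ltac:(lra)).
      assert (0 < exp ((INR n - 2) / 2 * ln v) / v) by (apply Rdiv_lt_0_compat; [apply exp_pos|lra]).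
      nra. }
    assert (Hs2 : xf alpha n w s * exp ((INR n - 2) / 2 * ln s) <=
                  xf alpha n w t0 * exp ((INR n - 2) / 2 * ln t0)).
    { apply HY. intros v Hv. destruct (Hbel v ltac:(lra)) as [_ HGv].
      assert (0 < exp ((INR n - 2) / 2 * ln v) / v) by (apply Rdiv_lt_0_compat; [apply exp_pos|lra]).
      nra. }
    pose proof (exp_pos ((INR n - 2) / 2 * ln s)).
    pose proof (exp_pos ((INR n - 2) / 2 * ln t0)).
    destruct Hs0; nra. }
  assert (HZ := mono_inc _ _ t0 t1 ltac:(lra) (fun v Hv => d_Z n alpha w dw v H ltac:(lra))).
  simpl in HZ.
  assert (Hz : psif alpha dw t0 * exp ((INR n - 2) * ln t0) <= psif alpha dw t1 * exp ((INR n - 2) * ln t1)).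
  { apply HZ. intros v Hv. destruct (Hall v ltac:(lra)) as [Hxv _].
    pose proof (key_Z n alpha w v Ha Hn ltac:(lra) ltac:(lra)).
    assert (0 < exp ((INR n - 2) * ln v) / v) by (apply Rdiv_lt_0_compat; [apply exp_pos|lra]).
    nra. }
  pose proof (exp_pos ((INR n - 2) * ln t1)).
  pose proof (exp_pos ((INR n - 2) * ln t0)).
  nra.
Qed.

Lemma lam_pos n alpha w t : 0 < alpha -> 10 + 4 * alpha <= INR n ->
  gelfand_ivp_solution n alpha w -> 0 < t -> 0 < Derive (lam alpha w) t.
Proof.
  intros Ha Hn [Hw0 [Hlim [dw H]]] Ht.
  rewrite (is_derive_unique _ _ _ (d_lam alpha w dw t Ht (proj1 (H t Ht)))).
  pose proof (psi_pos n alpha w dw t Ha Hn Hw0 Hlim H Ht).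
  unfold Lf. pose proof (exp_pos ((alpha + 2) * ln t + w t)).
  apply Rdiv_lt_0_compat; [nra|lra].
Qed.

Theorem theorem3p2 (alpha : R) (n : nat) (w : R -> R) :
  0 < alpha ->
  10 + 4 * alpha <= INR n ->
  gelfand_ivp_solution n alpha w ->
  at_most_two_sign_changes (Derive (lam alpha w)).
Proof.
  intros Ha Hn Hs [t1 [t2 [t3 [t4 [H1 [H2 [H3 [H4 [P1 _]]]]]]]]].
  pose proof (lam_pos n alpha w t1 Ha Hn Hs H1).
  pose proof (lam_pos n alpha w t2 Ha Hn Hs ltac:(lra)).
  nra.
Qed.
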